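(* Consider a decoder with center-convex decision regions operating in an additive noise channel $\mathbf r=\mathbf s+\sigma_0\boldsymbol\eta$ of arbitrary noise density, described in spherical coordinates by the joint density $f(r,\boldsymbol\theta)$ of the normalized noise amplitude $r=|\boldsymbol\eta|$ and the angles $\boldsymbol\theta$, and let $A=1/\sigma_0$. Then the average symbol error rate satisfies $P_e''(A)\ge0$ for all $A\in[A_1,A_2]$ provided $\partial f(r,\boldsymbol\theta)/\partial r\le0$ for all $\boldsymbol\theta$ and all $r\in[A_1d_{\min},A_2d_{\max}]$.
   Context: Setting: $\mathbf s\in\{\mathbf s_1,\dots,\mathbf s_M\}\subset\mathbb R^n$ with priors $\pi_k$; $\boldsymbol\eta$ is the normalized noise with a fixed distribution independent of $\mathbf s$, and $(r,\boldsymbol\theta)$ are its standard $n$-dimensional spherical coordinates; $f(r,\boldsymbol\theta)$ is differentiable in $r$. The decoder has pairwise disjoint decision regions $\Omega_k$ independent of $A$ (output $\mathbf s_k$ if $\mathbf r\in\Omega_k$, error if in none); $\Omega_k$ is center-convex if for every $\mathbf x\in\Omega_k$ the segment from $\mathbf s_k$ to $\mathbf x$ lies in $\Omega_k$. $P_e=\sum_k\pi_k(1-\Pr[\mathbf r\in\Omega_k\mid\mathbf s=\mathbf s_k])$. $d_{\min}$ ($d_{\max}$) is the minimum over $k$ of the minimum distance (maximum over $k$ of the maximum distance) from $\mathbf s_k$ to the boundary of $\Omega_k$. The noise need not be i.i.d. across dimensions. *)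

(* Defs.v *)
From HB Require Import structures.
From mathcomp Require Import all_boot all_order all_algebra.
From mathcomp Require Import all_classical all_reals all_analysis.
Set Implicit Arguments. Unset Strict Implicit. Unset Printing Implicit Defensive.
Import Order.TTheory GRing.Theory Num.Theory.
Import numFieldNormedType.Exports.
Local Open Scope classical_set_scope.
Local Open Scope ring_scope.

Definition enorm {R : realType} {n : nat} (v : 'rV[R]_n) : R :=
  Num.sqrt (\sum_(i < n) (v ord0 i) ^+ 2).

Definition bdry {T : topologicalType} (A : set T) : set T :=
  closure A `\` interior A.

Definition center_convex {R : realType} {n : nat}
  (c : 'rV[R]_n) (Om : set 'rV[R]_n) : Prop :=
  forall x, Om x -> forall t : R, 0 <= t <= 1 -> Om (c + t *: (x - c)).

(* d_min : min over k of the minimal distance from s_k to the boundary of Omega_k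
   (an extended real; +oo if all boundaries are empty). *)
Definition dmin {R : realType} {n M : nat}
  (s : 'I_M -> 'rV[R]_n) (Om : 'I_M -> set 'rV[R]_n) : \bar R :=
  ereal_inf [set e : \bar R | exists k (x : 'rV[R]_n), bdry (Om k) x /\ e = (enorm (x - s k))%:E].

Definition dmax {R : realType} {n M : nat}
  (s : 'I_M -> 'rV[R]_n) (Om : 'I_M -> set 'rV[R]_n) : \bar R :=
  ereal_sup [set e : \bar R | exists k (x : 'rV[R]_n), bdry (Om k) x /\ e = (enorm (x - s k))%:E].

(* Noise eta = rho * u(theta), with (rho,theta) having joint density f w.r.t.
   Lebesgue(d rho) x mu(d theta).  With A = 1/sigma_0, r = s_k + eta / A.
   Probability of correct decision given s = s_k: *)
Definition Pcorrect {R : realType} {n M : nat} {d : measure_display}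
  {Th : measurableType d} (mu : {measure set Th -> \bar R})
  (u : Th -> 'rV[R]_n) (f : R -> Th -> R)
  (s : 'I_M -> 'rV[R]_n) (Om : 'I_M -> set 'rV[R]_n) (k : 'I_M) (A : R) : R :=
  fine (\int[mu]_th
          \int[lebesgue_measure]_(rho in [set rho : R | (0 <= rho)%R /\
                                        Om k (s k + (rho / A)%R *: u th)%R])
             (f rho th)%:E)%E.

Definition Perr {R : realType} {n M : nat} {d : measure_display}
  {Th : measurableType d} (mu : {measure set Th -> \bar R})
  (u : Th -> 'rV[R]_n) (f : R -> Th -> R) (pi : 'I_M -> R)
  (s : 'I_M -> 'rV[R]_n) (Om : 'I_M -> set 'rV[R]_n) (A : R) : R :=
  \sum_(k < M) pi k * (1 - Pcorrect mu u f s Om k A).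

(* Main.v *)
Require Import Defs.
From HB Require Import structures.
From mathcomp Require Import all_boot all_order all_algebra.
From mathcomp Require Import all_classical all_reals all_analysis.
From mathcomp Require Import measurable_realfun.
From mathcomp Require Import ring lra.
Import Order.TTheory GRing.Theory Num.Theory.
Import numFieldNormedType.Exports.
Local Open Scope classical_set_scope.
Local Open Scope ring_scope.

Section D.
Context {R : realType}.

Lemma myder_cvg (P : R -> R) x : derivable P x 1 ->
  cvg ((fun h => h^-1 * (P (h + x) - P x)) @ 0^').
Proof.
move=> dx.
have -> : (fun h => h^-1 * (P (h + x) - P x)) =
   (fun h => h^-1 *: ((P \o shift x) (h *: 1) - P x)).
  by apply: funext => h /=; rewrite [h *: 1]mulr1.
exact: dx.
Qed.

Lemma divle (a b h d : R) : 0 < h -> 0 < d -> a * d <= b * h -> h^-1 * a <= b / d.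
Proof. by move=> h0 d0 H; rewrite mulrC ler_pdivrMr // mulrAC ler_pdivlMr. Qed.

Lemma divge (a b h d : R) : 0 < h -> 0 < d -> b * h <= a * d -> b / d <= h^-1 * a.
Proof. by move=> h0 d0 H; rewrite ler_pdivrMr // -mulrA mulrC ler_pdivlMr. Qed.

Definition conv3 (P : R -> R) (A1 A2 : R) := forall x y z, A1 <= x -> x < y -> y < z -> z <= A2 ->
  (z - x) * P y <= (z - y) * P x + (y - x) * P z.

Lemma slope_le (P : R -> R) A1 A2 x y : conv3 P A1 A2 ->
  A1 <= x -> x < y -> y <= A2 -> derivable P x 1 ->
  derive1 P x <= (P y - P x) / (y - x).
Proof.
move=> cv A1x xy yA2 dx.
have dc := @myder_cvg P x dx.
rewrite /derive1 (cvg_at_rightE _ _ dc).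
apply: limr_le.
  exact: (cvgP _ (cvg_dnbhs_at_right dc)).
have yx0 : 0 < y - x by rewrite subr_gt0.
near=> h.
have h0 : 0 < h by near: h; exact: nbhs_right_gt.
have hy : h < y - x by near: h; exact: nbhs_right_lt.
have := cv x (h + x) y A1x _ _ yA2.
rewrite ltrDr h0 -ltrBrDr hy => /(_ isT isT) H.
apply: divle => //; move: H; rewrite addrK; nra.
Unshelve. all: end_near.
Qed.

Lemma slope_ge (P : R -> R) A1 A2 x y : conv3 P A1 A2 ->
  A1 <= x -> x < y -> y <= A2 -> derivable P y 1 ->
  (P y - P x) / (y - x) <= derive1 P y.
Proof.
move=> cv A1x xy yA2 dy.
have dc := @myder_cvg P y dy.
rewrite /derive1 (cvg_at_leftE _ _ dc).
apply: limr_ge.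
  exact: (cvgP _ (cvg_dnbhs_at_left dc)).
have yx0 : 0 < y - x by rewrite subr_gt0.
near=> h.
have h0 : h < 0 by near: h; exact: nbhs_left_lt.
have hy : - (y - x) < h by near: h; apply: nbhs_left_gt; rewrite oppr_lt0.
have := cv x (h + y) y A1x _ _ yA2.
rewrite gtrDr h0 -ltrBlDr => /(_ _ isT) H.
have {}H := H ltac:(move: hy; lra).
have hN : 0 < - h by rewrite oppr_gt0.
have -> : h^-1 * (P (h + y) - P y) = (- h)^-1 * (P y - P (h + y)).
  by rewrite invrN mulNr -mulrN opprB.
apply: divge => //; move: H; nra.
Unshelve. all: end_near.
Qed.

Lemma conv_d2 (P : R -> R) A1 A2 A : conv3 P A1 A2 -> A1 < A2 -> A1 <= A <= A2 ->
  (\forall x \near A, derivable P x 1) -> derivable (derive1 P) A 1 ->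
  0 <= derive1 (derive1 P) A.
Proof.
move=> cv A12 /andP[A1A AA2] dn dd.
have mono : forall x y, A1 <= x -> x < y -> y <= A2 -> derivable P x 1 ->
    derivable P y 1 -> derive1 P x <= derive1 P y.
  move=> x y A1x xy yA2 dx dy.
  exact: (le_trans (slope_le _ _ _ _ _ cv A1x xy yA2 dx) (slope_ge _ _ _ _ _ cv A1x xy yA2 dy)).
have dc := @myder_cvg (derive1 P) A dd.
have dA : derivable P A 1 by apply: (nbhs_singleton dn).
move: dn => /nbhs_ballP [e /= e0 He].
have Hd : forall h, `|h| < e -> derivable P (h + A) 1.
  move=> h he; apply: He; rewrite /ball /=; have -> : A - (h + A) = - h by ring. by rewrite normrN.
have [AA2'|AA2'] := ltP A A2.
  rewrite /derive1 (cvg_at_rightE _ _ dc).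
  apply: limr_ge.
    exact: (cvgP _ (cvg_dnbhs_at_right dc)).
  near=> h.
  have h0 : 0 < h by near: h; exact: nbhs_right_gt.
  have hy : h < A2 - A by near: h; apply: nbhs_right_lt; rewrite subr_gt0.
  have he : h < e by near: h; apply: nbhs_right_lt.
  have dh : derivable P (h + A) 1 by apply: Hd; rewrite gtr0_norm.
  apply: mulr_ge0; first by rewrite invr_ge0 ltW.
  rewrite subr_ge0; apply: mono => //; first by rewrite ltrDr.
  by move: hy; lra.
have AA2e : A = A2 by apply/eqP; rewrite eq_le AA2.
have A1A' : A1 < A by rewrite AA2e.
rewrite /derive1 (cvg_at_leftE _ _ dc).
apply: limr_ge.
  exact: (cvgP _ (cvg_dnbhs_at_left dc)).
near=> h.
have h0 : h < 0 by near: h; exact: nbhs_left_lt.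
have hy : A1 - A < h by near: h; apply: nbhs_left_gt; rewrite subr_lt0.
have he : - e < h by near: h; apply: nbhs_left_gt; rewrite oppr_lt0.
have dh : derivable P (h + A) 1.
  by apply: Hd; rewrite ltr0_norm //; move: he; lra.
apply: mulr_le0; first by rewrite invr_le0 ltW.
rewrite subr_le0; apply: mono => //; first by move: hy; lra.
by rewrite gtrDr.
Unshelve. all: end_near.
Qed.
End D.

Section C.
Context {R : realType}.
Local Notation leb := (@lebesgue_measure R).

Lemma leb_oo (a b : R) : a <= b -> leb [set` `]a, b[%R] = (b - a)%:E.
Proof.
move=> ab; rewrite lebesgue_measure_itv /= lte_fin.
case: ifP => [_|/negbT]; first by rewrite EFinB.
rewrite -leNgt => ba; have -> : b = a by apply/eqP; rewrite eq_le ab ba.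
by rewrite subrr.
Qed.

Lemma leb_cc (a b : R) : a <= b -> leb [set` `[a, b]%R] = (b - a)%:E.
Proof.
move=> ab; rewrite lebesgue_measure_itv /= lte_fin.
case: ifP => [_|/negbT]; first by rewrite EFinB.
rewrite -leNgt => ba; have -> : b = a by apply/eqP; rewrite eq_le ab ba.
by rewrite subrr.
Qed.

Lemma divr_le_anti (r a b : R) : 0 <= r -> 0 < a -> a <= b -> r / b <= r / a.
Proof.
move=> r0 a0 ab; apply: ler_wpM2l => //.
by rewrite lef_pV2 // posrE (lt_le_trans a0 ab).
Qed.

Lemma arith (a b d : \bar R) (x y z c Rr : R) :
  (0 <= a)%E -> (0 <= b)%E -> (0 <= d)%E -> x < y -> y < z -> 0 <= c -> 0 <= Rr ->
  ((c * ((y - x) * Rr))%:E <= b)%E -> (d <= (c * ((z - y) * Rr))%:E)%E ->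
  ((z - y)%:E * a + (y - x)%:E * (a + b + d) <= (z - x)%:E * (a + b))%E.
Proof.
move=> a0 b0 d0 xy yz c0 R0 lb ub.
have zx : (0 < (z - x)%:E)%E by rewrite lte_fin; lra.
have bNy : b != -oo%E by apply: negbT; apply: gt_eqF; apply: lt_le_trans b0; exact: ltNyr.
have aNy : a != -oo%E by apply: negbT; apply: gt_eqF; apply: lt_le_trans a0; exact: ltNyr.
case: a a0 aNy => [a| |] //= a0 _; last first.
  by rewrite [in X in (_ <= X)%E]addye // [in X in (_ <= X)%E]gt0_muley //; exact: leey.
case: b b0 bNy lb => [b| |] //= b0 _ lb; last first.
  by rewrite [in X in (_ <= X)%E]addey // [in X in (_ <= X)%E]gt0_muley //; exact: leey.
case: d d0 ub => [d| |] //= d0 ub.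
rewrite -!EFinD -!EFinM lee_fin.
rewrite lee_fin in a0 b0 d0 lb ub.
have h1 : (z - y) * (c * ((y - x) * Rr)) <= (z - y) * b by apply: ler_wpM2l => //; lra.
have h2 : (y - x) * d <= (y - x) * (c * ((z - y) * Rr)) by apply: ler_wpM2l => //; lra.
have e : (z - y) * (c * ((y - x) * Rr)) = (y - x) * (c * ((z - y) * Rr)) by ring.
nra.
Qed.

Definition Sset (T : set R) (A : R) := [set rho : R | 0 <= rho /\ T (rho / A)].

Lemma core1D (g : R -> R) (T : set R) (x y z Rr : R) :
  (forall r, 0 <= g r) -> measurable_fun setT g ->
  0 < x -> x < y -> y < z ->
  (forall t t', 0 <= t' <= t -> T t -> T t') ->
  (forall A, 0 < A -> measurable (Sset T A : set (measurableTypeR R))) ->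
  0 <= Rr -> (forall t, 0 <= t -> T t -> t <= Rr) -> (forall t, 0 <= t < Rr -> T t) ->
  (0 < Rr -> forall r1 r2, x * Rr <= r1 -> r1 <= r2 -> r2 <= z * Rr -> g r2 <= g r1) ->
  ((z - y)%:E * (\int[leb]_(rho in Sset T x) (g rho)%:E) +
   (y - x)%:E * (\int[leb]_(rho in Sset T z) (g rho)%:E) <=
   (z - x)%:E * (\int[leb]_(rho in Sset T y) (g rho)%:E))%E.
Proof.
move=> g0 mg x0 xy yz down mS R0 ub lb mono.
have y0 : 0 < y by exact: lt_trans x0 xy.
have z0 : 0 < z by exact: lt_trans y0 yz.
have mgD : forall D : set (measurableTypeR R), measurable D ->
    measurable_fun D (EFin \o g : measurableTypeR R -> \bar R).
  move=> D mD; apply: measurable_funS (measurableT) (subsetT D) _.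
  apply/measurable_EFinP; exact mg.
have Ssub : forall a b, 0 < a -> a <= b -> Sset T a `<=` Sset T b.
  move=> a b a0 ab r [r0 Tr]; split=> //; apply: (down (r / a)) Tr.
  by rewrite divr_ge0 ?(ltW (lt_le_trans a0 ab)) //= divr_le_anti.
have spl : forall a b, 0 < a -> a <= b ->
    (\int[leb]_(rho in Sset T b) (g rho)%:E =
     \int[leb]_(rho in Sset T a) (g rho)%:E +
     \int[leb]_(rho in Sset T b `\` Sset T a) (g rho)%:E)%E.
  move=> a b a0 ab.
  have b0 : 0 < b by exact: lt_le_trans a0 ab.
  rewrite -{1}(setDUK (Ssub a b a0 ab)) ge0_integral_setU //.
  all: try (by move=> r _; rewrite lee_fin).
  all: try (by rewrite disj_set2E setDIK).
  all: try (by exact (measurableD (mS _ b0) (mS _ a0))).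
  all: try (by exact: mS).
  exact (mgD _ (measurableU _ _ (mS _ a0) (measurableD (mS _ b0) (mS _ a0)))).
rewrite (spl y z y0 (ltW yz)) (spl x y x0 (ltW xy)).
set c := g (y * Rr).
apply: (@arith _ _ _ x y z c Rr) => //.
- by apply: integral_ge0 => r _; rewrite lee_fin.
- by apply: integral_ge0 => r _; rewrite lee_fin.
- by apply: integral_ge0 => r _; rewrite lee_fin.
- exact: g0.
- apply: (@le_trans _ _ (\int[leb]_(rho in ([set` `]x * Rr, y * Rr[%R] : set (measurableTypeR R))) (g rho)%:E)%E).
    have -> : (c * ((y - x) * Rr))%:E = (\int[leb]_(rho in ([set` `]x * Rr, y * Rr[%R] : set (measurableTypeR R))) (cst c%:E) rho)%E.
      rewrite integral_cst //.
      have Hle : x * Rr <= y * Rr by apply: ler_wpM2r => //; exact: ltW.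
      have -> : (c * ((y - x) * Rr))%:E = (c%:E * (y * Rr - x * Rr)%:E)%E.
        by rewrite -EFinM; congr EFin; ring.
      congr (_ * _)%E; exact (esym (leb_oo _ _ Hle)).
    apply: ge0_le_integral => //.
    all: try (by move=> r _; rewrite /= lee_fin ?g0).
    all: try (exact: measurable_cst).
    all: try (exact: measurable_itv).
    all: try (exact (mgD _ (measurable_itv _))).
    move=> r; rewrite /= in_itv /= => /andP[r1 r2]; rewrite lee_fin /c.
    have [R0'|] := ltP 0 Rr; last first.
      move=> Rle; have R00 : Rr = 0 by apply/eqP; rewrite eq_le Rle R0.
      by move: r1 r2; rewrite R00 !mulr0; lra.
    apply: (mono R0' r (y * Rr)); [exact: ltW | exact: ltW |].
    by apply: ler_wpM2r => //; exact: ltW.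
  apply: ge0_subset_integral => //.
  all: try (by move=> r _; rewrite /= lee_fin ?g0).
  all: try (exact (measurableD (mS _ y0) (mS _ x0))).
  all: try (exact (mgD _ (measurableD (mS _ y0) (mS _ x0)))).
  move=> r; rewrite /= in_itv /= => /andP[r1 r2].
  have r0 : 0 <= r by apply: le_trans (ltW r1); apply: mulr_ge0 => //; exact: ltW.
  split.
    split => //; apply: lb; rewrite divr_ge0 ?(ltW y0) //=.
    by rewrite ltr_pdivrMr // mulrC.
  case=> _ /(ub _ (divr_ge0 r0 (ltW x0))).
  rewrite ler_pdivrMr // mulrC; lra.
- apply: (@le_trans _ _ (\int[leb]_(rho in ([set` `[y * Rr, z * Rr]%R] : set (measurableTypeR R))) (g rho)%:E)%E).
    apply: ge0_subset_integral => //.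
    all: try (by move=> r _; rewrite /= lee_fin ?g0).
    all: try (exact (measurableD (mS _ z0) (mS _ y0))).
    all: try (exact (mgD _ (measurable_itv _))).
    move=> r [[r0 Tr] NS]; rewrite /= in_itv /=.
    have := ub _ (divr_ge0 r0 (ltW z0)) Tr.
    rewrite ler_pdivrMr // mulrC => ->; rewrite andbT.
    rewrite leNgt; apply/negP => ry; apply: NS; split => //.
    by apply: lb; rewrite divr_ge0 ?(ltW y0) //= ltr_pdivrMr // mulrC.
  have -> : (c * ((z - y) * Rr))%:E = (\int[leb]_(rho in ([set` `[y * Rr, z * Rr]%R] : set (measurableTypeR R))) (cst c%:E) rho)%E.
    rewrite integral_cst //.
    have Hle : y * Rr <= z * Rr by apply: ler_wpM2r => //; exact: ltW.
    have -> : (c * ((z - y) * Rr))%:E = (c%:E * (z * Rr - y * Rr)%:E)%E.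
      by rewrite -EFinM; congr EFin; ring.
    congr (_ * _)%E; exact (esym (leb_cc _ _ Hle)).
  apply: ge0_le_integral => //.
  all: try (by move=> r _; rewrite /= lee_fin ?g0).
  all: try (exact: measurable_cst).
  all: try (exact: measurable_itv).
  all: try (exact (mgD _ (measurable_itv _))).
  move=> r; rewrite /= in_itv /= => /andP[r1 r2]; rewrite lee_fin /c.
  have [R0'|] := ltP 0 Rr; last first.
    move=> Rle; have R00 : Rr = 0 by apply/eqP; rewrite eq_le Rle R0.
    have -> : r = y * Rr by move: r1 r2; rewrite R00 !mulr0; lra.
    by [].
  apply: (mono R0' (y * Rr) r) => //.
  by apply: ler_wpM2r => //; exact: ltW.
Qed.

Lemma conc1D (g : R -> R) (T : set R) (x y z : R) :
  (forall r, 0 <= g r) -> measurable_fun setT g ->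
  0 < x -> x < y -> y < z ->
  (forall t t', 0 <= t' <= t -> T t -> T t') ->
  (forall A, 0 < A -> measurable (Sset T A : set (measurableTypeR R))) ->
  (forall Rr, 0 < Rr -> (forall t, 0 <= t -> T t -> t <= Rr) -> (forall t, 0 <= t < Rr -> T t) ->
     forall r1 r2, x * Rr <= r1 -> r1 <= r2 -> r2 <= z * Rr -> g r2 <= g r1) ->
  ((z - y)%:E * (\int[leb]_(rho in Sset T x) (g rho)%:E) +
   (y - x)%:E * (\int[leb]_(rho in Sset T z) (g rho)%:E) <=
   (z - x)%:E * (\int[leb]_(rho in Sset T y) (g rho)%:E))%E.
Proof.
move=> g0 mg x0 xy yz down mS mono.
have y0 : 0 < y by exact: lt_trans x0 xy.
have z0 : 0 < z by exact: lt_trans y0 yz.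
case: (pselect (exists t, 0 <= t /\ T t)) => [[t0 [t00 Tt0]]|Nex]; last first.
  have SE : forall A, 0 < A -> Sset T A = set0.
    move=> A A0; apply/seteqP; split => r //= [r0 Tr]; apply: Nex.
    by exists (r / A); split => //; rewrite divr_ge0 // ltW.
  by rewrite !SE // !integral_set0 !mule0 adde0.
case: (pselect (exists M, forall t, 0 <= t -> T t -> t <= M)) => [[M HM]|Nub].
  pose E := [set t | 0 <= t /\ T t].
  have hsE : has_sup E.
    split; first by exists t0.
    by exists M => t [t1 t2]; apply: HM.
  have ub : forall t, 0 <= t -> T t -> t <= sup E.
    by move=> t t1 t2; apply: sup_upper_bound => //.
  have lb : forall t, 0 <= t < sup E -> T t.
    move=> t /andP[t1 t2].
    have st : 0 < sup E - t by rewrite subr_gt0.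
    have [e [e0 Te] lt] := sup_adherent st hsE.
    apply: (down e t) Te; apply/andP; split => //.
    by move: lt; rewrite opprB addrCA subrr addr0 => /ltW.
  apply: (@core1D g T x y z (sup E) g0 mg x0 xy yz down mS _ ub lb).
    exact: le_trans t00 (ub _ t00 Tt0).
  by move=> R0'; apply: mono.
have allT : forall t, 0 <= t -> T t.
  move=> t t1; apply: contra_notP Nub => Nt.
  exists t => t' t'0 Tt'; rewrite leNgt; apply/negP => tt'.
  by apply: Nt; apply: (down t') Tt'; rewrite t1 ltW.
have SE : forall A, 0 < A -> Sset T A = [set r | 0 <= r].
  move=> A A0; apply/seteqP; split => r /=; first by case.
  by move=> r0; split => //; apply: allT; rewrite divr_ge0 // ltW.
rewrite !SE //.
rewrite -ge0_muleDl ?lee_fin; [|lra|lra].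
by rewrite -EFinD; have -> : z - y + (y - x) = z - x by ring.
Qed.
End C.

Section G.
Context {R : realType} {n : nat}.

Lemma enormZ (c : R) (v : 'rV[R]_n) : 0 <= c -> enorm (c *: v) = c * enorm v.
Proof.
move=> c0; rewrite /enorm.
under eq_bigr do rewrite mxE exprMn.
by rewrite -mulr_sumr sqrtrM ?sqr_ge0 // sqrtr_sqr ger0_norm.
Qed.

Lemma bdry_pt (Om : set 'rV[R]_n) (s v : 'rV[R]_n) (Rr : R) : 0 < Rr ->
  (forall t, 0 <= t -> Om (s + t *: v) -> t <= Rr) ->
  (forall t, 0 <= t < Rr -> Om (s + t *: v)) -> bdry Om (s + Rr *: v).
Proof.
move=> R0 ub lb.
have cphi : continuous (fun t : R => s + t *: v).
  move=> t; apply: cvgD; first exact: cvg_cst.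
  exact: scalel_continuous.
split.
  move=> B hB.
  have := cphi Rr B hB => /nbhs_ballP [e /= e0 He].
  pose t := Rr - Num.min e Rr / 2.
  have m0 : 0 < Num.min e Rr by rewrite lt_min e0.
  have me : Num.min e Rr <= e by rewrite ge_min lexx.
  have mR : Num.min e Rr <= Rr by rewrite ge_min lexx orbT.
  exists (s + t *: v); split.
    by apply: lb; apply/andP; split; rewrite /t; lra.
  apply: He; rewrite /ball /= /t.
  have -> : Rr - (Rr - Num.min e Rr / 2) = Num.min e Rr / 2 by ring.
  rewrite ger0_norm; lra.
move=> Hint.
have := cphi Rr Om Hint => /nbhs_ballP [e /= e0 He].
have hb : ball Rr e (Rr + e / 2).
  rewrite /ball /=; have -> : Rr - (Rr + e / 2) = - (e / 2) by ring.
  rewrite normrN ger0_norm; lra.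
have := ub (Rr + e / 2) ltac:(lra) (He _ hb).
lra.
Qed.
End G.

Theorem theorem7 (R : realType) (n M : nat)
  (d : measure_display) (Th : measurableType d)
  (mu : {measure set Th -> \bar R}) (u : Th -> 'rV[R]_n) (f : R -> Th -> R)
  (pi : 'I_M -> R) (s : 'I_M -> 'rV[R]_n) (Om : 'I_M -> set 'rV[R]_n)
  (A1 A2 : R) :
  (forall k, 0 <= pi k) -> \sum_(k < M) pi k = 1 ->
  (forall th, enorm (u th) = 1) ->
  (forall rho th, 0 <= f rho th) ->
  measurable_fun setT (fun p : R * Th => f p.1 p.2) ->
  (\int[mu]_th \int[lebesgue_measure]_(rho in [set rho : R | (0 <= rho)%R])
       (f rho th)%:E = 1)%E ->
  (forall th rho, 0 < rho -> derivable (fun r => f r th) rho 1) ->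
  (forall k, measurable [set p : R * Th | Om k (s k + p.1 *: u p.2)]) ->
  (forall k l, k != l -> Om k `&` Om l = set0) ->
  (forall k, center_convex (s k) (Om k)) ->
  0 < A1 -> A1 < A2 ->
  (forall th r, 0 < r -> (A1%:E * dmin s Om <= r%:E <= A2%:E * dmax s Om)%E ->
     derive1 (fun rho => f rho th) r <= 0) ->
  forall A, A1 <= A <= A2 ->
    (\forall x \near A, derivable (Perr mu u f pi s Om) x 1) ->
    derivable (derive1 (Perr mu u f pi s Om)) A 1 ->
    0 <= derive1 (derive1 (Perr mu u f pi s Om)) A.
Proof.
move=> pi0 pi1 unorm f0 mf f1 fder mOm disj cc A10 A12 fmono A AI dn dd.
pose T (k : 'I_M) th := [set t : R | Om k (s k + t *: u th)].
have down : forall k th t t', 0 <= t' <= t -> T k th t -> T k th t'.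
  move=> k th t t' /andP[t'0 t't] Tt.
  have [t0|t0] := eqVneq t 0.
    have -> : t' = t by apply/eqP; rewrite eq_le t't t0 t'0.
    exact: Tt.
  have := cc k _ Tt (t' / t) ltac:(apply/andP; split;
    [by rewrite divr_ge0 // (le_trans t'0 t't) | by rewrite ler_pdivrMr ?mul1r //; rewrite lt_def t0 (le_trans t'0 t't)]).
  rewrite /T /=.
  have -> : s k + t *: u th - s k = t *: u th by rewrite addrC addKr.
  by rewrite scalerA divfK.
have mP : forall k A, 0 < A ->
    measurable [set p : R * Th | 0 <= p.1 /\ Om k (s k + (p.1 / A) *: u p.2)].
  move=> k B B0.
  have -> : [set p : R * Th | 0 <= p.1 /\ Om k (s k + (p.1 / B) *: u p.2)] =
     ([set` `[0%R, +oo[%R] `*` setT) `&`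
     ((fun p : R * Th => (p.1 / B, p.2)) @^-1` [set p : R * Th | Om k (s k + p.1 *: u p.2)]).
    apply/seteqP; split => p /=.
      by case=> p0 Op; split => //; split => //=; rewrite in_itv /= p0.
    by case=> -[/=]; rewrite in_itv /= andbT => p0 _ Op.
  apply: measurableI.
    by apply: measurableX => //; exact: measurable_itv.
  have mphi : measurable_fun setT (fun p : R * Th => (p.1 / B, p.2)).
    apply: measurable_fun_pair; last exact: measurable_snd.
    by apply: measurable_funM; [exact: measurable_fst | exact: measurable_cst].
  rewrite -[X in measurable X]setTI; exact: mphi measurableT _ (mOm k).
have mJ : forall P : set (R * Th), measurable P -> measurable_fun setT
    (fun th => \int[lebesgue_measure]_(rho in [set rho : R | P (rho, th)]) (f rho th)%:E)%E.
  move=> P mP0.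
  pose F := ((fun p : R * Th => (f p.1 p.2)%:E) \_ P).
  have -> : (fun th => \int[lebesgue_measure]_(rho in [set rho : R | P (rho, th)]) (f rho th)%:E)%E
      = fubini_G lebesgue_measure F.
    apply: funext => th; rewrite /fubini_G [LHS]integral_mkcond; apply: eq_integral => rho _.
    rewrite /patch /F /=; congr (if _ then _ else _); apply/idP/idP; rewrite !inE //=.
  apply: measurable_fun_fubini_tonelli_G.
    apply/measurable_restrict => //.
    apply: measurable_funS (measurableT) (subsetT _) _.
    exact/measurable_EFinP.
  by move=> p; apply: erestrict_ge0 => q _; rewrite lee_fin.
have dmm : forall k th Rr, 0 < Rr -> (forall t, 0 <= t -> T k th t -> t <= Rr) ->
    (forall t, 0 <= t < Rr -> T k th t) ->
    (dmin s Om <= Rr%:E)%E /\ (Rr%:E <= dmax s Om)%E.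
  move=> k th Rr R0 ub lb.
  have hb := bdry_pt (Om k) (s k) (u th) Rr R0 ub lb.
  have e : enorm (s k + Rr *: u th - s k) = Rr.
    by rewrite addrC addKr enormZ ?unorm ?mulr1 // ltW.
  split; [apply: ereal_inf_lbound | apply: ereal_sup_ubound];
    by exists k, (s k + Rr *: u th); rewrite e.
have monoT : forall k th x z, A1 <= x -> z <= A2 -> 0 < x ->
   forall Rr, 0 < Rr -> (forall t, 0 <= t -> T k th t -> t <= Rr) -> (forall t, 0 <= t < Rr -> T k th t) ->
     forall r1 r2, x * Rr <= r1 -> r1 <= r2 -> r2 <= z * Rr -> f r2 th <= f r1 th.
  move=> k th x z A1x zA2 x0 Rr R0 ub lb r1 r2 r1x r12 r2z.
  have [dm dM] := dmm k th Rr R0 ub lb.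
  have xR0 : 0 < x * Rr by apply: mulr_gt0.
  have r10 : 0 < r1 by apply: lt_le_trans xR0 r1x.
  have hA1 : A1 * Rr <= x * Rr by apply: ler_wpM2r => //; exact: ltW.
  have hA2 : z * Rr <= A2 * Rr by apply: ler_wpM2r => //; exact: ltW.
  have hder : forall r, r1 <= r -> r <= r2 -> derive1 (fun rho => f rho th) r <= 0.
    move=> r h1 h2; apply: fmono; first by apply: lt_le_trans r10 h1.
    apply/andP; split.
      apply: le_trans (lee_wpmul2l _ dm) _; first by rewrite lee_fin ltW.
      by rewrite -EFinM lee_fin; lra.
    apply: le_trans _ (lee_wpmul2l _ dM); last by rewrite lee_fin ltW // (lt_trans A10 A12).
    by rewrite -EFinM lee_fin; lra.
  apply: (@ler0_derive1_nincr _ (fun rho => f rho th) r1 r2) => //.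
  - move=> r; rewrite in_itv /= => /andP[h1 h2]; apply: fder; lra.
  - by move=> r; rewrite in_itv /= => /andP[h1 h2]; apply: hder; lra.
  - apply: derivable_within_continuous => r; rewrite in_itv /= => /andP[h1 h2].
    by apply: fder; lra.
have mS : forall k th B, 0 < B -> measurable (Sset (T k th) B : set (measurableTypeR R)).
  move=> k th B B0.
  have := pair2_measurable th measurableT (mP k B B0); rewrite setTI => h.
  exact h.
have mg : forall th, measurable_fun setT (fun r => f r th).
  move=> th; exact (measurableT_comp mf (pair2_measurable th)).
have m0 : measurable ([set rho : R | 0 <= rho] : set (measurableTypeR R)).
  have -> : [set rho : R | 0 <= rho] = [set` `[0%R, +oo[%R].
    by apply/seteqP; split => r /=; rewrite in_itv /= andbT.
  exact: measurable_itv.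
have Hk : forall k x y z, A1 <= x -> x < y -> y < z -> z <= A2 ->
  (z - y) * Pcorrect mu u f s Om k x + (y - x) * Pcorrect mu u f s Om k z <=
  (z - x) * Pcorrect mu u f s Om k y.
  move=> k x y z A1x xy yz zA2.
  have x0 : 0 < x by apply: lt_le_trans A10 A1x.
  have y0 : 0 < y by apply: lt_trans x0 xy.
  have z0 : 0 < z by apply: lt_trans y0 yz.
  pose J B th := (\int[lebesgue_measure]_(rho in Sset (T k th) B) (f rho th)%:E)%E.
  pose I B := (\int[mu]_th J B th)%E.
  have eP : forall B, Pcorrect mu u f s Om k B = fine (I B) by [].
  have mJB : forall B, 0 < B -> measurable_fun setT (J B).
    move=> B B0; have h := mJ _ (mP k B B0); exact h.
  have J0 : forall B th, (0 <= J B th)%E.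
    by move=> B th; apply: integral_ge0 => r _; rewrite lee_fin.
  have finI : forall B, 0 < B -> I B \is a fin_num.
    move=> B B0; rewrite ge0_fin_numE; last by apply: integral_ge0 => th _; exact: J0.
    apply: le_lt_trans (ltry 1); rewrite -f1.
    apply: ge0_le_integral => //.
    all: try (by move=> th _; exact: J0).
    all: try (exact (mJB B B0)).
    all: try (have m0R : measurable [set rho : R | 0 <= rho];
      [ have -> : [set rho : R | 0 <= rho] = [set` `[0%R, +oo[%R];
        [ by apply/seteqP; split => r /=; rewrite in_itv /= andbT
        | exact: measurable_itv ] |
      have := (@measurable_fst _ _ R Th) measurableT _ m0R; rewrite setTI => m0P;
      have h := mJ _ m0P; exact h ]).
    move=> th _; apply: ge0_subset_integral => //.
    - exact: mS.
    - apply: measurable_funS (measurableT) (subsetT _) _; apply/measurable_EFinP; exact (mg th).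
    - by move=> r _; rewrite lee_fin.
    by move=> r [].
  have key : ((z - y)%:E * I x + (y - x)%:E * I z <= (z - x)%:E * I y)%E.
    have E1 : forall c B, 0 <= c -> 0 < B -> (c%:E * I B = \int[mu]_th (c%:E * J B th))%E.
      move=> c B c0 B0; rewrite ge0_integralZl // ?lee_fin //; exact (mJB B B0).
    have zy : 0 <= z - y by lra. have yx : 0 <= y - x by lra. have zx : 0 <= z - x by lra.
    rewrite (E1 _ _ zy x0) (E1 _ _ yx z0) (E1 _ _ zx y0).
    rewrite -ge0_integralD //; last 4 first.
    - by move=> th _; rewrite mule_ge0 // lee_fin; lra.
    - by apply: measurable_funeM; exact (mJB x x0).
    - by move=> th _; rewrite mule_ge0 // lee_fin; lra.
    - by apply: measurable_funeM; exact (mJB z z0).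
    apply: ge0_le_integral => //.
    - by move=> th _; rewrite adde_ge0 // mule_ge0 // lee_fin; lra.
    - by apply: emeasurable_funD; apply: measurable_funeM; [exact (mJB x x0)|exact (mJB z z0)].
    - by apply: measurable_funeM; exact (mJB y y0).
    move=> th _; rewrite /J.
    exact (@conc1D R (fun r => f r th) (T k th) x y z (fun r => f0 r th) (mg th) x0 xy yz (down k th) (mS k th) (monoT k th x z A1x zA2 x0)).
  move: key; rewrite !eP -(fineK (finI x x0)) -(fineK (finI y y0)) -(fineK (finI z z0)).
  by rewrite -!EFinM -EFinD lee_fin.
have cv : conv3 (Perr mu u f pi s Om) A1 A2.
  move=> x y z A1x xy yz zA2; rewrite /Perr !mulr_sumr -big_split /=.
  apply: ler_sum => k _.
  have H := Hk k x y z A1x xy yz zA2.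
  set a := Pcorrect mu u f s Om k x in H *.
  set b := Pcorrect mu u f s Om k y in H *.
  set c := Pcorrect mu u f s Om k z in H *.
  rewrite -subr_ge0.
  have -> : (z - y) * (pi k * (1 - a)) + (y - x) * (pi k * (1 - c)) - (z - x) * (pi k * (1 - b))
     = pi k * ((z - x) * b - ((z - y) * a + (y - x) * c)) by ring.
  by apply: mulr_ge0; [exact: pi0 | rewrite subr_ge0].
exact: (conv_d2 _ _ _ _ cv A12 AI dn dd).
Qed.
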